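(* Let $N\ge2$ be an integer and $u=1/N$. For all real $\sigma\ge0$ and all $x\in[1/N,1]$, \[\Bigl|\sum_{k=0}^{\lfloor\sigma\rfloor}\hat F^k\varphi_0(x)-a(\sigma)\Bigr|\le\frac{N(N-1)}{2},\qquad\text{where } a(\sigma):=\frac{1}{\log N}\sum_{k=0}^{\lfloor\sigma\rfloor}\lambda\bigl(F^{-k}[1/N,1]\bigr).\]
   Context: $\lambda$ is Lebesgue measure; $F$ is the Farey map, $F(x)=x/(1-x)$ for $0\le x\le1/2$, $F(x)=(1-x)/x$ for $1/2<x\le1$. $\mu$ is the measure $d\mu=dx/x$ on $[0,1]$. $\hat F$ is the transfer operator of $F$ with respect to $\mu$, given explicitly by $\hat Ff(x)=\dfrac{f(x/(1+x))+x\,f(1/(1+x))}{1+x}$. $\varphi_0(x):=x$ on $[0,1]$. Note $a(\sigma)$ equals the $\mu$-average of $\sum_{k=0}^{\lfloor\sigma\rfloor}\hat F^k\varphi_0$ over $[1/N,1]$. *)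

(* Defs.v *)
From Stdlib Require Import Reals Lra Lia ClassicalEpsilon.
Open Scope R_scope.

Definition Farey (x : R) : R :=
  if Rle_dec x (1/2) then x / (1 - x) else (1 - x) / x.

(* Transfer operator of F with respect to dmu = dx/x (explicit formula). *)
Definition Fhat (f : R -> R) : R -> R :=
  fun x => (f (x / (1 + x)) + x * f (1 / (1 + x))) / (1 + x).

Definition phi0 (x : R) : R := x.

(* Integral over [a,b] (Riemann integral; the value is independent of the
   integrability proof).  If f is not Riemann integrable, an arbitrary value
   is returned -- this case does not occur below. *)
Definition RInt (f : R -> R) (a b : R) : R :=
  epsilon (inhabits 0)
    (fun l => exists pr : Riemann_integrable f a b, RiemannInt pr = l).

Definition preim_ind (k : nat) (lo : R) (x : R) : R :=
  if Rle_dec lo (Nat.iter k Farey x) then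
    if Rle_dec (Nat.iter k Farey x) 1 then 1 else 0
  else 0.

(* Lebesgue measure of F^{-k}[lo,1] (a finite union of intervals in [0,1]). *)
Definition leb_preim (k : nat) (lo : R) : R := RInt (preim_ind k lo) 0 1.

Definition nfloor (s : R) : nat := Z.to_nat (Int_part s).

Definition a_sigma (N : nat) (sigma : R) : R :=
  / ln (INR N) * sum_f_R0 (fun k => leb_preim k (/ INR N)) (nfloor sigma).

(* Main.v *)
Require Import Defs.
From Stdlib Require Import Reals Lra ClassicalEpsilon.
From Coquelicot Require Import Coquelicot.
Require Import Defs.
Open Scope R_scope.


Lemma mono (h dh : R -> R) x y : x <= y ->
  (forall t, x <= t <= y -> is_derive h t (dh t)) ->
  (forall t, x <= t <= y -> 0 <= dh t) -> h x <= h y.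
Proof.
  intros Hxy Hd Hp. destruct (Rle_lt_or_eq_dec _ _ Hxy) as [Hlt|Heq].
  - destruct (MVT_cor2 h dh x y Hlt) as [c [Hc1 Hc2]].
    + intros c Hc. apply is_derive_Reals. apply Hd; lra.
    + assert (0 <= dh c * (y - x)) by (apply Rmult_le_pos; [apply Hp; lra| lra]). lra.
  - subst; lra.
Qed.

Fixpoint fW (n : nat) : R -> R :=
  match n with
  | O => fun W => / W
  | S m => fun W => / W + (W * fW m (W + 1) + fW m (1 + / W)) / (W + 1)
  end.

Fixpoint f1 (n : nat) : R -> R :=
  match n with
  | O => fun W => - / (W * W)
  | S m => fun W => - / (W * W) + f1 m (W + 1) * W / (W + 1)
      - f1 m (1 + / W) / (W * W * (W + 1))
      + (fW m (W + 1) - fW m (1 + / W)) / ((W + 1) * (W + 1))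
  end.

Fixpoint f2 (n : nat) : R -> R :=
  match n with
  | O => fun W => 2 / (W * W * W)
  | S m => fun W => 2 / (W * W * W) + f2 m (W + 1) * W / (W + 1)
      + f2 m (1 + / W) / (W * W * W * W * (W + 1))
      + 2 * f1 m (W + 1) / ((W + 1) * (W + 1))
      + f1 m (1 + / W) * (4 * W + 2) / (W * W * W * ((W + 1) * (W + 1)))
      - 2 * (fW m (W + 1) - fW m (1 + / W)) / ((W + 1) * (W + 1) * (W + 1))
  end.

Lemma inv_pos_1 W : 0 < W -> 0 < 1 + / W.
Proof. intros; assert (0 < / W) by (apply Rinv_0_lt_compat; lra); lra. Qed.

Ltac side := repeat split; try (intro; nra); try lra.

Lemma derivs n : forall W, 0 < W ->
  is_derive (fW n) W (f1 n W) /\ is_derive (f1 n) W (f2 n W).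
Proof.
  induction n as [|m IH]; intros W HW.
  - split; simpl; auto_derive; try side; field; lra.
  - assert (HA : 0 < W + 1) by lra. assert (HB := inv_pos_1 W HW).
    destruct (IH _ HA) as [A1 A2]. destruct (IH _ HB) as [B1 B2].
    split; simpl; auto_derive.
    + repeat split; try (intro; nra); try lra; eexists; eassumption.
    + replace (Derive (fun x : R => fW m x) (W+1)) with (f1 m (W+1)) by (symmetry; apply is_derive_unique; exact A1).
      replace (Derive (fun x : R => fW m x) (1 + / W)) with (f1 m (1 + / W)) by (symmetry; apply is_derive_unique; exact B1). field; lra.
    + repeat split; try (intro; nra); try lra; eexists; eassumption.
    + replace (Derive (fun x : R => fW m x) (W+1)) with (f1 m (W+1)) by (symmetry; apply is_derive_unique; exact A1).
      replace (Derive (fun x : R => fW m x) (1 + / W)) with (f1 m (1 + / W)) by (symmetry; apply is_derive_unique; exact B1).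
      replace (Derive (fun x : R => f1 m x) (W+1)) with (f2 m (W+1)) by (symmetry; apply is_derive_unique; exact A2).
      replace (Derive (fun x : R => f1 m x) (1 + / W)) with (f2 m (1 + / W)) by (symmetry; apply is_derive_unique; exact B2). field; lra.
Qed.

Lemma divpos x y : 0 <= x -> 0 < y -> 0 <= x / y.
Proof. intros; unfold Rdiv; apply Rmult_le_pos; [lra| left; apply Rinv_0_lt_compat; lra]. Qed.

Lemma invsq_le1 W : 1 <= W -> / (W * W) <= 1.
Proof. intros. rewrite <- Rinv_1. apply Rinv_le_contravar; nra. Qed.

Lemma alg1 W a b D : 1 <= W -> -1 <= b -> b <= a -> (W - / W) * b <= D ->
  -1 <= - / (W * W) + a * W / (W + 1) - b / (W * W * (W + 1)) + D / ((W + 1) * (W + 1)).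
Proof.
  intros HW Hb Hba HD.
  assert (E : - / (W * W) + a * W / (W + 1) - b / (W * W * (W + 1)) + D / ((W + 1) * (W + 1)) + 1
    = (1 - / (W * W)) * (1 + b) + (a - b) * W / (W + 1) + (D - (W - / W) * b) / ((W + 1) * (W + 1)))
    by (field; lra).
  assert (0 <= (1 - / (W * W)) * (1 + b)) by (apply Rmult_le_pos; [generalize (invsq_le1 W HW); lra | lra]).
  assert (0 <= (a - b) * W / (W + 1)) by (apply divpos; [apply Rmult_le_pos|]; lra).
  assert (0 <= (D - (W - / W) * b) / ((W + 1) * (W + 1))) by (apply divpos; nra).
  lra.
Qed.

Lemma alg2 W a b D : 1 <= W -> -1 <= b -> a <= 0 -> D <= (W - / W) * a ->
  - / (W * W) + a * W / (W + 1) - b / (W * W * (W + 1)) + D / ((W + 1) * (W + 1)) <= 0.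
Proof.
  intros HW Hb Ha HD.
  assert (Hi : 0 < / W) by (apply Rinv_0_lt_compat; lra).
  assert (Hi1 : / W <= 1) by (rewrite <- Rinv_1; apply Rinv_le_contravar; lra).
  assert (E : - (- / (W * W) + a * W / (W + 1) - b / (W * W * (W + 1)) + D / ((W + 1) * (W + 1)))
    = / (W * W) * (1 - / (W + 1)) + (1 + b) / (W * W * (W + 1))
      + (- a) * (W / (W + 1) + (W - / W) / ((W + 1) * (W + 1)))
      + ((W - / W) * a - D) / ((W + 1) * (W + 1)))
    by (field; lra).
  assert (0 <= / (W * W) * (1 - / (W + 1))).
  { apply Rmult_le_pos. left; apply Rinv_0_lt_compat; nra.
    assert (/ (W + 1) <= 1) by (rewrite <- Rinv_1; apply Rinv_le_contravar; lra). lra. }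
  assert (0 <= (1 + b) / (W * W * (W + 1))) by (apply divpos; nra).
  assert (0 <= W - / W) by lra.
  assert (0 <= (- a) * (W / (W + 1) + (W - / W) / ((W + 1) * (W + 1)))).
  { apply Rmult_le_pos. lra. assert (0 <= W / (W+1)) by (apply divpos; lra).
    assert (0 <= (W - / W) / ((W + 1) * (W + 1))) by (apply divpos; nra). lra. }
  assert (0 <= ((W - / W) * a - D) / ((W + 1) * (W + 1))) by (apply divpos; nra).
  lra.
Qed.

Lemma alg3 W a b D al be : 1 <= W -> -1 <= a -> -1 <= b -> D <= (W - / W) * a ->
  0 <= al -> 0 <= be ->
  0 <= 2 / (W * W * W) + al * W / (W + 1)
      + be / (W * W * W * W * (W + 1))
      + 2 * a / ((W + 1) * (W + 1))
      + b * (4 * W + 2) / (W * W * W * ((W + 1) * (W + 1)))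
      - 2 * (D) / ((W + 1) * (W + 1) * (W + 1)).
Proof.
  intros HW Ha Hb HD Hal Hbe.
  assert (E : 2 / (W * W * W) + al * W / (W + 1)
      + be / (W * W * W * W * (W + 1))
      + 2 * a / ((W + 1) * (W + 1))
      + b * (4 * W + 2) / (W * W * W * ((W + 1) * (W + 1)))
      - 2 * (D) / ((W + 1) * (W + 1) * (W + 1))
    = al * W / (W + 1) + be / (W * W * W * W * (W + 1))
      + 2 * ((W - / W) * a - D) / ((W + 1) * (W + 1) * (W + 1))
      + 2 * (1 + a) / (W * ((W + 1) * (W + 1)))
      + (1 + b) * (4 * W + 2) / (W * W * W * ((W + 1) * (W + 1))))
    by (field; lra).
  rewrite E.
  assert (0 <= al * W / (W + 1)) by (apply divpos; nra).
  assert (0 <= be / (W * W * W * W * (W + 1))).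
  { apply divpos; [lra|]. assert (0 < W * W) by nra. assert (0 < W*W*W) by nra. assert (0 < W*W*W*W) by nra. nra. }
  assert (0 <= 2 * ((W - / W) * a - D) / ((W + 1) * (W + 1) * (W + 1))).
  { apply divpos; [lra|]. assert (0 < (W+1)*(W+1)) by nra. nra. }
  assert (0 <= 2 * (1 + a) / (W * ((W + 1) * (W + 1)))).
  { apply divpos; [lra|]. assert (0 < (W+1)*(W+1)) by nra. nra. }
  assert (0 <= (1 + b) * (4 * W + 2) / (W * W * W * ((W + 1) * (W + 1)))).
  { apply divpos; [nra|]. assert (0 < (W+1)*(W+1)) by nra. assert (0 < W*W*W) by nra. nra. }
  lra.
Qed.

Lemma der_lm (g : R -> R) d c t : is_derive g t d ->
  is_derive (fun s => s * c - g s) t (c - d).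
Proof.
  intros H. auto_derive. exists d; exact H.
  replace (Derive (fun x : R => g x) t) with d by (symmetry; apply is_derive_unique; exact H). ring.
Qed.

Lemma der_ml (g : R -> R) d c t : is_derive g t d ->
  is_derive (fun s => g s - s * c) t (d - c).
Proof.
  intros H. auto_derive. exists d; exact H.
  replace (Derive (fun x : R => g x) t) with d by (symmetry; apply is_derive_unique; exact H). ring.
Qed.

Lemma invariant n : forall W, 1 <= W -> (-1 <= f1 n W <= 0) /\ 0 <= f2 n W.
Proof.
  induction n as [|m IH]; intros W HW.
  - simpl. assert (0 < / (W * W)) by (apply Rinv_0_lt_compat; nra).
    generalize (invsq_le1 W HW); intro. split; [lra|].
    apply divpos; nra.
  - assert (Hi : 0 < / W) by (apply Rinv_0_lt_compat; lra).
    assert (Hi1 : / W <= 1) by (rewrite <- Rinv_1; apply Rinv_le_contravar; lra).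
    set (u := W + 1). set (v := 1 + / W).
    assert (Hv : 1 <= v) by (unfold v; lra). assert (Hvu : v <= u) by (unfold u, v; lra).
    assert (f1mono : forall t1 t2, 1 <= t1 -> t1 <= t2 -> f1 m t1 <= f1 m t2).
    { intros t1 t2 H1 H2. apply (mono (f1 m) (f2 m)); auto.
      - intros t Ht. apply derivs; lra.
      - intros t Ht. apply IH; lra. }
    destruct (IH u) as [[Ha1 Ha2] Hal]; [unfold u; lra|].
    destruct (IH v) as [[Hb1 Hb2] Hbe]; [lra|].
    assert (Hba : f1 m v <= f1 m u) by (apply f1mono; lra).
    assert (HuvW : u - v = W - / W) by (unfold u, v; ring).
    assert (HDup : fW m u - fW m v <= (W - / W) * f1 m u).
    { assert (H := mono (fun t => t * f1 m u - fW m t) (fun t => f1 m u - f1 m t) v u Hvu).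
      cbv beta in H. rewrite <- HuvW. enough (v * f1 m u - fW m v <= u * f1 m u - fW m u) by nra.
      apply H.
      - intros t Ht. apply der_lm. apply derivs; lra.
      - intros t Ht. assert (f1 m t <= f1 m u) by (apply f1mono; lra). lra. }
    assert (HDlo : (W - / W) * f1 m v <= fW m u - fW m v).
    { assert (H := mono (fun t => fW m t - t * f1 m v) (fun t => f1 m t - f1 m v) v u Hvu).
      cbv beta in H. rewrite <- HuvW. enough (fW m v - v * f1 m v <= fW m u - u * f1 m v) by nra.
      apply H.
      - intros t Ht. apply der_ml. apply derivs; lra.
      - intros t Ht. assert (f1 m v <= f1 m t) by (apply f1mono; lra). lra. }
    simpl. fold u v. split; [split|].
    + apply alg1; auto.
    + apply alg2; auto.
    + apply alg3; auto.
Qed.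

Lemma fW_dec n W1 W2 : 1 <= W1 -> W1 <= W2 -> fW n W2 <= fW n W1.
Proof.
  intros H1 H2.
  assert (H := mono (fun t => t * 0 - fW n t) (fun t => 0 - f1 n t) W1 W2 H2). cbv beta in H.
  enough (W1 * 0 - fW n W1 <= W2 * 0 - fW n W2) by lra. apply H.
  - intros t Ht. apply der_lm. apply derivs; lra.
  - intros t Ht. destruct (invariant n t) as [[? ?] ?]; lra.
Qed.

Lemma fW_lip n W1 W2 : 1 <= W1 -> W1 <= W2 -> fW n W1 <= fW n W2 + (W2 - W1).
Proof.
  intros H1 H2.
  assert (H := mono (fun t => fW n t - t * (-1)) (fun t => f1 n t - (-1)) W1 W2 H2). cbv beta in H.
  enough (fW n W1 - W1 * (-1) <= fW n W2 - W2 * (-1)) by lra. apply H.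
  - intros t Ht. apply der_ml. apply derivs; lra.
  - intros t Ht. destruct (invariant n t) as [[? ?] ?]; lra.
Qed.

Definition Sn (n : nat) (y : R) : R := sum_f_R0 (fun k => Nat.iter k Fhat phi0 y) n.

Lemma Fhat_add (f g : R -> R) y : Fhat (fun z => f z + g z) y = Fhat f y + Fhat g y.
Proof. unfold Fhat, Rdiv. ring. Qed.

Lemma Sn_rec n y : Sn (S n) y = y + Fhat (Sn n) y.
Proof.
  induction n as [|n IH].
  - unfold Sn. simpl. reflexivity.
  - unfold Sn in *. rewrite tech5. rewrite IH.
    change (Nat.iter (S (S n)) Fhat phi0 y) with (Fhat (Nat.iter (S n) Fhat phi0) y).
    change (fun y0 : R => sum_f_R0 (fun k : nat => Nat.iter k Fhat phi0 y0) (S n))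
      with (fun y0 : R => sum_f_R0 (fun k : nat => Nat.iter k Fhat phi0 y0) n + Nat.iter (S n) Fhat phi0 y0).
    rewrite Fhat_add. ring.
Qed.

Lemma link n : forall W, 0 < W -> fW n W = Sn n (/ W).
Proof.
  induction n as [|n IH]; intros W HW.
  - unfold Sn; simpl. reflexivity.
  - rewrite Sn_rec. simpl fW. rewrite (IH (W+1)) by lra.
    rewrite (IH (1 + / W)) by (apply inv_pos_1; lra).
    unfold Fhat.
    assert (Hi : 0 < / W) by (apply Rinv_0_lt_compat; lra).
    replace (/ W / (1 + / W)) with (/ (W + 1)) by (field; lra).
    replace (1 / (1 + / W)) with (/ (1 + / W)) by (field; lra).
    field. split; lra.
Qed.

Fixpoint Psi (k : nat) : R -> R :=
  match k with
  | O => fun y => y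
  | S m => fun y => Psi m (y / (1 + y)) - Psi m (1 / (1 + y))
  end.

Lemma Psi_der k : forall y, 0 < y -> is_derive (Psi k) y (Nat.iter k Fhat phi0 y / y).
Proof.
  induction k as [|m IH]; intros y Hy.
  - simpl. unfold phi0. auto_derive; auto. field; lra.
  - assert (HL : 0 < y / (1 + y)) by (apply Rdiv_lt_0_compat; lra).
    assert (HR : 0 < 1 / (1 + y)) by (apply Rdiv_lt_0_compat; lra).
    assert (A := IH _ HL). assert (B := IH _ HR).
    simpl Psi. auto_derive.
    + repeat split; try lra; eexists; eassumption.
    + change (Nat.iter (S m) Fhat phi0 y) with (Fhat (Nat.iter m Fhat phi0) y).
      set (s := Nat.iter m Fhat phi0) in *. unfold Fhat. unfold Rdiv in *.
      replace (Derive (fun x : R => Psi m x) (y * / (1 + y))) with (s (y * / (1 + y)) * / (y * / (1 + y)))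
        by (symmetry; apply is_derive_unique; exact A).
      replace (Derive (fun x : R => Psi m x) (1 * / (1 + y))) with (s (1 * / (1 + y)) * / (1 * / (1 + y)))
        by (symmetry; apply is_derive_unique; exact B).
      field. lra.
Qed.

Definition Tn (n : nat) (y : R) : R := sum_f_R0 (fun k => Psi k y) n.

Lemma Tn_der n : forall y, 0 < y -> is_derive (Tn n) y (Sn n y / y).
Proof.
  induction n as [|n IH]; intros y Hy.
  - unfold Tn, Sn. exact (Psi_der 0 y Hy).
  - unfold Tn. change (fun y0 => sum_f_R0 (fun k => Psi k y0) (S n))
      with (fun y0 => Tn n y0 + Psi (S n) y0).
    assert (A := IH _ Hy). assert (B := Psi_der (S n) _ Hy).
    replace (Sn (S n) y / y) with (plus (Sn n y / y) (Nat.iter (S n) Fhat phi0 y / y)).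
    + apply (is_derive_plus (Tn n) (Psi (S n))); assumption.
    + unfold Sn. rewrite tech5. unfold plus; simpl. field. lra.
Qed.

Lemma Tn_bounds n c m M : 0 < c -> c <= 1 ->
  (forall y, c <= y <= 1 -> m <= Sn n y <= M) ->
  m * (- ln c) <= Tn n 1 - Tn n c <= M * (- ln c).
Proof.
  intros Hc Hc1 HB.
  split.
  - assert (H := mono (fun t => Tn n t - t * 0 - m * ln t) (fun t => Sn n t / t - 0 - m * / t) c 1 Hc1).
    cbv beta in H.
    enough (Tn n c - c * 0 - m * ln c <= Tn n 1 - 1 * 0 - m * ln 1) by (rewrite ln_1 in *; lra).
    apply H.
    + intros t Ht. assert (A := Tn_der n t ltac:(lra)). auto_derive.
      * split; [eexists; exact A| repeat split; lra].
      * replace (Derive (fun x : R => Tn n x) t) with (Sn n t / t)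
          by (symmetry; apply is_derive_unique; exact A). field. lra.
    + intros t Ht. destruct (HB t Ht). replace (Sn n t / t - 0 - m * / t) with ((Sn n t - m) / t) by (field; lra).
      apply divpos; lra.
  - assert (H := mono (fun t => M * ln t - Tn n t) (fun t => M * / t - Sn n t / t) c 1 Hc1).
    cbv beta in H.
    enough (M * ln c - Tn n c <= M * ln 1 - Tn n 1) by (rewrite ln_1 in *; lra).
    apply H.
    + intros t Ht. assert (A := Tn_der n t ltac:(lra)). auto_derive.
      * split; [lra| split; [eexists; exact A| auto]].
      * replace (Derive (fun x : R => Tn n x) t) with (Sn n t / t)
          by (symmetry; apply is_derive_unique; exact A). field. lra.
    + intros t Ht. destruct (HB t Ht). replace (M * / t - Sn n t / t) with ((M - Sn n t) / t) by (field; lra).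
      apply divpos; lra.
Qed.


Lemma RInt_of_is f a b l : is_RInt f a b l -> Defs.RInt f a b = l.
Proof.
  intros H. unfold Defs.RInt.
  assert (Hex : exists l', exists pr : Riemann_integrable f a b, RiemannInt pr = l').
  { exists (RiemannInt (ex_RInt_Reals_0 f a b (ex_intro _ l H))). eexists; reflexivity. }
  destruct (epsilon_spec (inhabits 0) _ Hex) as [pr Hpr]. rewrite <- Hpr.
  rewrite <- (RInt_Reals f a b pr). apply is_RInt_unique. exact H.
Qed.

Lemma is_RInt_val (f : R -> R) a b (l l' : R) : is_RInt f a b l -> l = l' -> is_RInt f a b l'.
Proof. intros H E; subst; exact H. Qed.

Lemma plusR (a b : R) : plus a b = a + b.
Proof. reflexivity. Qed.
Lemma minusR (a b : R) : minus a b = a - b.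
Proof. reflexivity. Qed.

Definition ind (p q t : R) : R :=
  if Rle_dec p t then if Rle_dec t q then 1 else 0 else 0.

Lemma ind_base p q : 0 <= p -> p <= q -> q <= 1 -> is_RInt (ind p q) 0 1 (q - p).
Proof.
  intros H1 H2 H3.
  assert (A : is_RInt (ind p q) 0 p 0).
  { apply (is_RInt_ext (fun _ => 0)).
    - intros x Hx. rewrite Rmin_left in Hx by lra. rewrite Rmax_right in Hx by lra.
      unfold ind. destruct (Rle_dec p x); [lra| reflexivity].
    - apply (is_RInt_val _ _ _ _ _ (is_RInt_const 0 p 0)). unfold scal; simpl. unfold mult; simpl. ring. }
  assert (B : is_RInt (ind p q) p q (q - p)).
  { apply (is_RInt_ext (fun _ => 1)).
    - intros x Hx. rewrite Rmin_left in Hx by lra. rewrite Rmax_right in Hx by lra.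
      unfold ind. destruct (Rle_dec p x); [|lra]. destruct (Rle_dec x q); [reflexivity| lra].
    - apply (is_RInt_val _ _ _ _ _ (is_RInt_const p q 1)). unfold scal; simpl. unfold mult; simpl. ring. }
  assert (C : is_RInt (ind p q) q 1 0).
  { apply (is_RInt_ext (fun _ => 0)).
    - intros x Hx. rewrite Rmin_left in Hx by lra. rewrite Rmax_right in Hx by lra.
      unfold ind. destruct (Rle_dec p x); [|reflexivity]. destruct (Rle_dec x q); [lra| reflexivity].
    - apply (is_RInt_val _ _ _ _ _ (is_RInt_const q 1 0)). unfold scal; simpl. unfold mult; simpl. ring. }
  apply (is_RInt_val _ _ _ _ _ (is_RInt_Chasles _ _ _ _ _ _ (is_RInt_Chasles _ _ _ _ _ _ A B) C)).
  unfold plus; simpl. ring.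
Qed.

Lemma le_div a b c : 0 < c -> (a <= b / c <-> a * c <= b).
Proof.
  intros Hc. split; intros H.
  - replace b with (b / c * c) by (field; lra). apply Rmult_le_compat_r; lra.
  - apply (Rmult_le_reg_r c); [lra|]. replace (b / c * c) with b by (field; lra). exact H.
Qed.

Lemma div_le a b c : 0 < c -> (b / c <= a <-> b <= a * c).
Proof.
  intros Hc. split; intros H.
  - replace b with (b / c * c) by (field; lra). apply Rmult_le_compat_r; lra.
  - apply (Rmult_le_reg_r c); [lra|]. replace (b / c * c) with b by (field; lra). exact H.
Qed.

Lemma Farey_range y : 0 <= y <= 1 -> 0 <= Farey y <= 1.
Proof.
  intros H. unfold Farey. destruct (Rle_dec y (1/2)).
  - split; [apply le_div|apply div_le]; lra.
  - split; [apply le_div|apply div_le]; lra.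
Qed.

Lemma iter_range k x : 0 <= x <= 1 -> 0 <= Nat.iter k Farey x <= 1.
Proof. intros H. induction k; simpl; auto. apply Farey_range; auto. Qed.

Lemma ind_equiv p q a p' q' b : (p <= a <-> p' <= b) -> (a <= q <-> b <= q') -> ind p q a = ind p' q' b.
Proof.
  intros E1 E2. unfold ind.
  destruct (Rle_dec p a), (Rle_dec p' b); try tauto;
  destruct (Rle_dec a q), (Rle_dec b q'); tauto.
Qed.

Lemma ind_equiv_rev p q a p' q' b : (p <= a <-> b <= q') -> (a <= q <-> p' <= b) -> ind p q a = ind p' q' b.
Proof.
  intros E1 E2. unfold ind.
  destruct (Rle_dec p a), (Rle_dec p' b); destruct (Rle_dec a q), (Rle_dec b q'); tauto.
Qed.

Lemma ind_zero p q t : ~ (p <= t /\ t <= q) -> ind p q t = 0.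
Proof. intros H. unfold ind. destruct (Rle_dec p t); [|reflexivity]. destruct (Rle_dec t q); [tauto|reflexivity]. Qed.

Lemma ind_F p q y : 0 <= p -> p <= q -> q <= 1 -> 0 <= y <= 1 ->
  ind p q (Farey y) = ind (p / (1 + p)) (q / (1 + q)) y + ind (1 / (1 + q)) (1 / (1 + p)) y
     - (if Req_EM_T q 1 then ind (1/2) (1/2) y else 0).
Proof.
  intros Hp Hpq Hq Hy. unfold Farey. destruct (Rle_dec y (1/2)) as [Hl|Hl].
  - assert (E : ind p q (y / (1 - y)) = ind (p / (1 + p)) (q / (1 + q)) y).
    { apply ind_equiv.
      - rewrite le_div by lra. rewrite div_le by lra. split; intros; nra.
      - rewrite div_le by lra. rewrite le_div by lra. split; intros; nra. }
    rewrite E. destruct (Req_EM_T q 1) as [Hq1|Hq1].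
    + subst q. replace (1 / (1 + 1)) with (1/2) by field.
      assert (ind (1 / 2) (1 / (1 + p)) y = ind (1/2) (1/2) y).
      { apply ind_equiv. tauto. split; intros _.
        - lra.
        - rewrite le_div by lra. nra. }
      lra.
    + rewrite (ind_zero (1 / (1 + q))). ring.
      intros [H1 H2]. rewrite div_le in H1 by lra. nra.
  - assert (E : ind p q ((1 - y) / y) = ind (1 / (1 + q)) (1 / (1 + p)) y).
    { apply ind_equiv_rev.
      - rewrite le_div by lra. rewrite le_div by lra. split; intros; nra.
      - rewrite div_le by lra. rewrite div_le by lra. split; intros; nra. }
    rewrite E. rewrite (ind_zero (p / (1 + p))).
    + destruct (Req_EM_T q 1); [rewrite (ind_zero (1/2)); [ring|lra]| ring].
    + intros [H1 H2]. rewrite le_div in H2 by lra. nra.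
Qed.

Lemma preim_int k : forall p q, 0 <= p -> p <= q -> q <= 1 ->
  is_RInt (fun x => ind p q (Nat.iter k Farey x)) 0 1 (Psi k q - Psi k p).
Proof.
  induction k as [|k IH]; intros p q H1 H2 H3.
  - simpl. apply ind_base; auto.
  - assert (L1 : 0 <= p / (1 + p)) by (apply le_div; lra).
    assert (L2 : p / (1 + p) <= q / (1 + q)).
    { rewrite le_div by lra. replace (p / (1 + p) * (1 + q)) with ((p * (1 + q)) / (1 + p)) by (field; lra).
      rewrite div_le by lra. nra. }
    assert (L3 : q / (1 + q) <= 1) by (apply div_le; lra).
    assert (R1 : 0 <= 1 / (1 + q)) by (apply le_div; lra).
    assert (R2 : 1 / (1 + q) <= 1 / (1 + p)).
    { rewrite le_div by lra. replace (1 / (1 + q) * (1 + p)) with ((1 + p) / (1 + q)) by (field; lra).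
      rewrite div_le by lra. nra. }
    assert (R3 : 1 / (1 + p) <= 1) by (apply div_le; lra).
    assert (HL := IH _ _ L1 L2 L3). assert (HR := IH _ _ R1 R2 R3).
    assert (HS := is_RInt_plus _ _ _ _ _ _ HL HR).
    destruct (Req_EM_T q 1) as [Hq|Hq].
    + assert (HH := IH (1/2) (1/2) ltac:(lra) ltac:(lra) ltac:(lra)).
      assert (HT := is_RInt_minus _ _ _ _ _ _ HS HH).
      apply (is_RInt_ext (fun x => plus (ind (p / (1 + p)) (q / (1 + q)) (Nat.iter k Farey x)) (ind (1 / (1 + q)) (1 / (1 + p)) (Nat.iter k Farey x))
                 - ind (1/2) (1/2) (Nat.iter k Farey x))).
      { intros x Hx. rewrite Rmin_left, Rmax_right in Hx by lra. simpl Nat.iter.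
        rewrite (ind_F p q (Nat.iter k Farey x)) by (auto; apply iter_range; lra).
        destruct (Req_EM_T q 1) as [_|]; [|contradiction]. reflexivity. }
      apply (is_RInt_val _ _ _ _ _ HT). rewrite minusR, plusR. simpl Psi. ring.
    + apply (is_RInt_ext (fun x => plus (ind (p / (1 + p)) (q / (1 + q)) (Nat.iter k Farey x)) (ind (1 / (1 + q)) (1 / (1 + p)) (Nat.iter k Farey x)))).
      { intros x Hx. rewrite Rmin_left, Rmax_right in Hx by lra. simpl Nat.iter.
        rewrite (ind_F p q (Nat.iter k Farey x)) by (auto; apply iter_range; lra).
        destruct (Req_EM_T q 1) as [|_]; [contradiction|]. rewrite Rminus_0_r. reflexivity. }
      apply (is_RInt_val _ _ _ _ _ HS). rewrite plusR. simpl Psi; try ring.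
Qed.

Lemma leb_preim_Psi k c : 0 <= c <= 1 -> leb_preim k c = Psi k 1 - Psi k c.
Proof.
  intros Hc. unfold leb_preim. apply RInt_of_is.
  apply (is_RInt_ext (fun x => ind c 1 (Nat.iter k Farey x))).
  - intros x _. unfold ind, preim_ind. reflexivity.
  - apply preim_int; lra.
Qed.

Lemma sum_leb n c : 0 <= c <= 1 ->
  sum_f_R0 (fun k => leb_preim k c) n = Tn n 1 - Tn n c.
Proof.
  intros Hc. induction n as [|n IH].
  - simpl. unfold Tn. simpl. apply leb_preim_Psi; auto.
  - rewrite tech5, IH. unfold Tn. rewrite !tech5. rewrite leb_preim_Psi by auto. ring.
Qed.

Theorem lemma1 (N : nat) (HN : (2 <= N)%nat) (sigma : R) (Hs : 0 <= sigma)
  (x : R) (Hx : / INR N <= x <= 1) :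
  Rabs (sum_f_R0 (fun k => Nat.iter k Fhat phi0 x) (nfloor sigma)
        - a_sigma N sigma)
  <= INR N * (INR N - 1) / 2.
Proof.
  assert (HN2 : 2 <= INR N) by (apply le_INR in HN; simpl in HN; lra).
  set (n := nfloor sigma). set (c := / INR N).
  assert (Hc0 : 0 < c) by (apply Rinv_0_lt_compat; lra).
  assert (Hc1 : c <= 1) by (unfold c; rewrite <- Rinv_1; apply Rinv_le_contravar; lra).
  assert (Hic : / c = INR N) by (unfold c; apply Rinv_inv).
  set (m := Sn n c). set (M := Sn n 1).
  assert (Hm : m = fW n (INR N)) by (unfold m; rewrite link by lra; rewrite <- Hic, Rinv_inv; reflexivity).
  assert (HM : M = fW n 1) by (unfold M; rewrite link by lra; rewrite Rinv_1; reflexivity).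
  assert (SB : forall y, c <= y <= 1 -> m <= Sn n y <= M).
  { intros y Hy. assert (Hy0 : 0 < y) by lra.
    assert (E : Sn n y = fW n (/ y)) by (rewrite link by (apply Rinv_0_lt_compat; lra); rewrite Rinv_inv; reflexivity).
    assert (W1 : 1 <= / y) by (rewrite <- Rinv_1; apply Rinv_le_contravar; lra).
    assert (W2 : / y <= INR N) by (rewrite <- Hic; apply Rinv_le_contravar; lra).
    rewrite E, Hm, HM. split; apply fW_dec; lra. }
  assert (HMm : M <= m + (INR N - 1)) by (rewrite Hm, HM; apply fW_lip; lra).
  assert (HL : ln (INR N) > 0) by (rewrite <- ln_1; apply ln_increasing; lra).
  assert (Hlc : - ln c = ln (INR N)) by (unfold c; rewrite ln_Rinv by lra; ring).
  destruct (Tn_bounds n c m M Hc0 Hc1 SB) as [T1 T2]. rewrite Hlc in T1, T2.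
  change (sum_f_R0 (fun k => Nat.iter k Fhat phi0 x) n) with (Sn n x).
  unfold a_sigma. fold n. fold c. rewrite sum_leb by lra.
  set (L := ln (INR N)) in *. set (D := Tn n 1 - Tn n c) in *.
  assert (Hi : 0 < / L) by (apply Rinv_0_lt_compat; lra).
  assert (A1 : m <= / L * D).
  { replace m with (/ L * (m * L)) by (field; lra). apply Rmult_le_compat_l; lra. }
  assert (A2 : / L * D <= M).
  { replace M with (/ L * (M * L)) by (field; lra). apply Rmult_le_compat_l; lra. }
  destruct (SB x Hx).
  apply Rabs_le. split; nra.
Qed.
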